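(* The operator $\mathcal J:C(P)\to C(P)$ is a linear bijection (a linear automorphism of $C(P)$).
   Context: Let $R$ be an irreducible reduced crystallographic root system of rank $n$ spanning a real Euclidean space $V$; $\alpha^\vee:=2\alpha/\langle\alpha,\alpha\rangle$; $P$ the weight lattice; $R^+$ positive roots with simple roots $\alpha_1,\dots,\alpha_n$; $P^+$ the dominant weights; $A:=\{x:0<\langle x,\alpha^\vee\rangle<1\ \forall\alpha\in R^+\}$. $W_0$ finite Weyl group, $W$ extended affine Weyl group generated by $W_0$ and translations $t_\lambda$ ($\lambda\in P$); $s_j$ reflection in $\{\langle x,\alpha_j^\vee\rangle=0\}$; $\ell(w)$ = number of hyperplanes $\{\langle x,\alpha^\vee\rangle=k\}$ separating $A$ and $wA$. $w_\lambda$ = shortest element of $W_0$ with $w_\lambda\lambda\in P^+$, $\lambda_+:=w_\lambda\lambda$. $q:W\to\mathbb R\setminus\{0\}$ length multiplicative, $q_j:=q_{s_j}$. $\mathcal H_0$: finite Hecke algebra with basis $T_w$ ($w\in W_0$), $(T_j-q_j)(T_j+q_j^{-1})=0$, $T_{ww'}=T_wT_{w'}$ if lengths add. $C(P)$: functions $P\to\mathbb C$, $(wf)(\lambda)=f(w^{-1}\lambda)$. $I(\cdot)$ is the representation of $\mathcal H_0$ on $C(P)$ with $T_j\mapsto I_j:=q_js_j+(q_j-q_j^{-1})J_j$, where for $m:=\langle\lambda,\alpha_j^\vee\rangle$: $(J_jf)(\lambda)=-\sum_{k=1}^{m}f(\lambda-k\alpha_j)$ if $m>0$, $0$ if $m=0$,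 $\sum_{k=0}^{-m-1}f(\lambda+k\alpha_j)$ if $m<0$. $\mathcal J:C(P)\to C(P)$ is $(\mathcal Jf)(\lambda):=q_{t_\lambda}q_{w_\lambda}\big(I(T_{w_\lambda^{-1}})^{-1}f\big)(\lambda_+)$. *)

(* Defs.v *)
From Stdlib Require Import ClassicalEpsilon.
From HB Require Import structures.
From mathcomp Require Import all_boot all_order all_algebra all_field.
Set Implicit Arguments. Unset Strict Implicit. Unset Printing Implicit Defensive.
Import Order.TTheory GRing.Theory Num.Theory.
Local Open Scope ring_scope.

Section RootData.
Variables (F : realFieldType) (n : nat).
Local Notation V := 'rV[F]_n.

Definition pair (x y : V) : F := (x *m y^T) 0 0.
Definition coroot (al : V) : V := (2 / pair al al) *: al.
Definition refl (al x : V) : V := x - pair x (coroot al) *: al.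

Definition root_system (R : seq V) : Prop :=
  uniq R /\ (0 : V) \notin R /\
  row_full (\matrix_(i < size R) nth 0 R i) /\
  (forall al be, al \in R -> be \in R -> refl al be \in R) /\
  (forall al be, al \in R -> be \in R -> exists z : int, pair be (coroot al) = z%:~R) /\
  (forall al (c : F), al \in R -> c *: al \in R -> c = 1 \/ c = -1) /\
  (* irreducible: nonempty, not a union of two nonempty orthogonal parts *)
  R != [::] /\
  (forall S : pred V,
      (forall al be, al \in R -> be \in R -> S al -> ~~ S be -> pair al be = 0) ->
      (forall al, al \in R -> S al) \/ (forall al, al \in R -> ~~ S al)).

Definition regular (R : seq V) (v : V) : Prop := forall al, al \in R -> pair al v != 0.
Definition Rplus (R : seq V) (v : V) : seq V := [seq al <- R | 0 < pair al v].
Definition is_simple (R : seq V) (v : V) (be : V) : Prop :=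
  be \in Rplus R v /\
  ~ (exists b1 b2, [/\ b1 \in Rplus R v, b2 \in Rplus R v & be = b1 + b2]).
Definition simple_roots (R : seq V) (v : V) (a : 'I_n -> V) : Prop :=
  [/\ injective a, (forall j, is_simple R v (a j)) &
      (forall be, is_simple R v be -> exists j, a j = be)].

Definition inP (R : seq V) (x : V) : Prop :=
  forall al, al \in R -> exists z : int, pair x (coroot al) = z%:~R.
Definition dominant (R : seq V) (v : V) (x : V) : Prop :=
  forall al, al \in Rplus R v -> 0 <= pair x (coroot al).
Definition inA (R : seq V) (v : V) (x : V) : Prop :=
  forall al, al \in Rplus R v -> 0 < pair x (coroot al) < 1.

Definition aff := ('M[F]_n * V)%type.
Definition act (w : aff) (x : V) : V := x *m w.1 + w.2.
Definition mulW (w1 w2 : aff) : aff := (w2.1 *m w1.1, w2.2 *m w1.1 + w1.2).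
Definition idW : aff := (1%:M, 0).
Definition invW (w : aff) : aff := (invmx w.1, - (w.2 *m invmx w.1)).
Definition transl (la : V) : aff := (1%:M, la).
Definition sref (a : 'I_n -> V) (j : 'I_n) : aff :=
  (1%:M - (coroot (a j))^T *m a j, 0).
Definition wordW (a : 'I_n -> V) (u : seq 'I_n) : aff :=
  foldr (fun j w => mulW (sref a j) w) idW u.
Definition inW0 (a : 'I_n -> V) (M : 'M[F]_n) : Prop :=
  exists u, M = (wordW a u).1.
Definition inW (R : seq V) (a : 'I_n -> V) (w : aff) : Prop :=
  inW0 a w.1 /\ inP R w.2.

(* length: number of hyperplanes {<x,al^v> = k} (al in R^+, k in Z)
   separating A and wA *)
Definition separates (R : seq V) (v : V) (w : aff) (al : V) (k : int) : Prop :=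
  forall x, inA R v x ->
    (pair x (coroot al) - k%:~R) * (pair (act w x) (coroot al) - k%:~R) < 0.
Definition length_is (R : seq V) (v : V) (w : aff) (m : nat) : Prop :=
  exists s : seq (V * int),
    [/\ uniq s, size s = m &
        forall p, p \in s <-> (p.1 \in Rplus R v /\ separates R v w p.1 p.2)].
Definition len (R : seq V) (v : V) (w : aff) : nat :=
  epsilon (inhabits 0%N) (length_is R v w).

Definition length_multiplicative (R : seq V) (v : V) (a : 'I_n -> V)
    (q : aff -> F) : Prop :=
  (forall w, inW R a w -> q w != 0) /\
  (forall w w', inW R a w -> inW R a w' ->
     len R v (mulW w w') = (len R v w + len R v w')%N ->
     q (mulW w w') = q w * q w').

Definition is_wl (R : seq V) (v : V) (a : 'I_n -> V) (la : V) (w : aff) : Prop :=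
  [/\ inW0 a w.1, w.2 = 0, dominant R v (act w la) &
      forall w', inW0 a w'.1 -> w'.2 = 0 -> dominant R v (act w' la) ->
        (len R v w <= len R v w')%N].
Definition wl R v a la : aff := epsilon (inhabits idW) (is_wl R v a la).
Definition redword R v a (w : aff) : seq 'I_n :=
  epsilon (inhabits [::]) (fun u => wordW a u = w /\ size u = len R v w).

Definition weight (R : seq V) := {x : V | inP R x}.

Lemma inP0 (R : seq V) : inP R 0.
Proof. by move=> al _; exists 0; rewrite /pair mul0mx mxE. Qed.

Definition mkW (R : seq V) (x : V) : weight R :=
  match excluded_middle_informative (inP R x) with
  | left h => exist _ x h
  | right _ => exist _ 0 (@inP0 R)
  end.

Definition toZ (x : F) : int := epsilon (inhabits 0) (fun z : int => x = z%:~R).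

Variable K : fieldExtType F.

Definition CP (R : seq V) := weight R -> K.

Definition Jj (R : seq V) (a : 'I_n -> V) (j : 'I_n) (f : CP R) : CP R :=
  fun la =>
  match toZ (pair (proj1_sig la) (coroot (a j))) with
  | Posz m => - \sum_(1 <= k < m.+1) f (mkW R (proj1_sig la - k%:R *: a j))
  | Negz m => \sum_(0 <= k < m.+1) f (mkW R (proj1_sig la + k%:R *: a j))
  end.

Definition qj (q : aff -> F) (a : 'I_n -> V) (j : 'I_n) : F := q (sref a j).

Definition Iop R a q (j : 'I_n) (f : CP R) : CP R :=
  fun la => qj q a j *: f (mkW R (act (sref a j) (proj1_sig la)))
            + (qj q a j - (qj q a j)^-1) *: Jj a j f la.
(* I(T_j)^-1 = I_j - (q_j - q_j^-1), from the quadratic relation *)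
Definition Iinv R a q (j : 'I_n) (f : CP R) : CP R :=
  fun la => Iop a q j f la - (qj q a j - (qj q a j)^-1) *: f la.
(* I(T_{j1} ... T_{jr})^-1 = I(T_{jr})^-1 ... I(T_{j1})^-1 *)
Definition IinvWord R a q (u : seq 'I_n) (f : CP R) : CP R :=
  foldl (fun g j => Iinv a q j g) f u.

Definition calJ (R : seq V) (v : V) (a : 'I_n -> V) (q : aff -> F)
    (f : CP R) : CP R :=
  fun la =>
    let w := wl R v a (proj1_sig la) in
    (q (transl (proj1_sig la)) * q w) *:
      IinvWord a q (redword R v a (invW w)) f (mkW R (act w (proj1_sig la))).

End RootData.

(* Main.v *)
Require Import Defs.
From HB Require Import structures.
From mathcomp Require Import all_boot all_order all_algebra all_field.
From mathcomp Require Import zify ring lra.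
From Stdlib Require Import ClassicalEpsilon Classical ProofIrrelevance FunctionalExtensionality.
Set Implicit Arguments. Unset Strict Implicit. Unset Printing Implicit Defensive.
Import Order.TTheory GRing.Theory Num.Theory.
Local Open Scope ring_scope.


Section Basics.
Variables (F : realFieldType) (n : nat).
Local Notation V := 'rV[F]_n.
Implicit Types x y z : V.

Lemma pairE x y : pair x y = \sum_i x 0 i * y 0 i.
Proof. by rewrite /pair mxE; apply: eq_bigr => i _; rewrite mxE. Qed.

Lemma pairC x y : pair x y = pair y x.
Proof. by rewrite !pairE; apply: eq_bigr => i _; rewrite mulrC. Qed.

Lemma pairDl x y z : pair (x + y) z = pair x z + pair y z.
Proof. by rewrite !pairE -big_split; apply: eq_bigr => i _; rewrite mxE mulrDl. Qed.

Lemma pairZl (c : F) x y : pair (c *: x) y = c * pair x y.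
Proof. by rewrite !pairE mulr_sumr; apply: eq_bigr => i _; rewrite mxE mulrA. Qed.

Lemma pairNl x y : pair (- x) y = - pair x y.
Proof. by rewrite -scaleN1r pairZl mulN1r. Qed.

Lemma pairBl x y z : pair (x - y) z = pair x z - pair y z.
Proof. by rewrite pairDl pairNl. Qed.

Lemma pairDr x y z : pair z (x + y) = pair z x + pair z y.
Proof. by rewrite pairC pairDl !(pairC z). Qed.
Lemma pairZr (c : F) x y : pair y (c *: x) = c * pair y x.
Proof. by rewrite pairC pairZl pairC. Qed.
Lemma pairNr x y : pair y (- x) = - pair y x.
Proof. by rewrite pairC pairNl pairC. Qed.
Lemma pairBr x y z : pair z (x - y) = pair z x - pair z y.
Proof. by rewrite pairDr pairNr. Qed.
Lemma pair0l y : pair 0 y = 0.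
Proof. by rewrite pairE big1 // => i _; rewrite mxE mul0r. Qed.
Lemma pair0r y : pair y 0 = 0.
Proof. by rewrite pairC pair0l. Qed.

Lemma pair_ge0 x : 0 <= pair x x.
Proof. by rewrite pairE sumr_ge0 // => i _; rewrite -expr2 sqr_ge0. Qed.

Lemma pair_eq0 x : (pair x x == 0) = (x == 0).
Proof.
apply/idP/idP; last by move/eqP->; rewrite pair0l.
rewrite pairE psumr_eq0 => [H|i _]; last by rewrite -expr2 sqr_ge0.
apply/eqP/rowP => i; rewrite mxE; move/allP: H => /(_ i (mem_index_enum i)).
by rewrite implyTb mulf_eq0 orbb => /eqP.
Qed.

Lemma pair_gt0 x : x != 0 -> 0 < pair x x.
Proof. by move=> hx; rewrite lt_def pair_ge0 pair_eq0 hx. Qed.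

End Basics.


Section Refl.
Variables (F : realFieldType) (n : nat).
Local Notation V := 'rV[F]_n.
Implicit Types x y z al : V.

Lemma reflE al x : refl al x = x - pair x (coroot al) *: al.
Proof. by []. Qed.

Lemma pair_coroot al : al != 0 -> pair al (coroot al) = 2.
Proof.
move=> h; rewrite /coroot pairZr mulrAC -mulrA divff ?mulr1 //.
by rewrite pair_eq0.
Qed.

Lemma refl_self al : al != 0 -> refl al al = - al.
Proof. by move=> h; rewrite reflE pair_coroot // scaler_nat mulr2n opprD addrA subrr sub0r. Qed.

Lemma reflD al x y : refl al (x + y) = refl al x + refl al y.
Proof. by rewrite !reflE pairDl scalerDl opprD addrACA. Qed.
Lemma reflZ al (c : F) x : refl al (c *: x) = c *: refl al x.
Proof. by rewrite !reflE pairZl scalerBr scalerA. Qed.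
Lemma reflN al x : refl al (- x) = - refl al x.
Proof. by rewrite -scaleN1r reflZ scaleN1r. Qed.
Lemma reflB al x y : refl al (x - y) = refl al x - refl al y.
Proof. by rewrite reflD reflN. Qed.

Lemma reflK al : al != 0 -> involutive (refl al).
Proof.
move=> h x; rewrite [refl al x]reflE reflB reflZ refl_self // scalerN opprK.
by rewrite reflE subrK.
Qed.

Lemma pair_refl al x y : pair (refl al x) y = pair x (refl al y).
Proof.
rewrite !reflE pairBl pairBr pairZl pairZr /coroot !pairZr.
by rewrite (pairC al y) -!mulrA [pair y al * _]mulrC.
Qed.

Lemma pair_refl2 al x y : al != 0 -> pair (refl al x) (refl al y) = pair x y.
Proof. by move=> h; rewrite pair_refl reflK. Qed.

Lemma pair_coroot_sign al x : al != 0 ->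
  pair x (coroot al) = (2 / pair al al) * pair x al.
Proof. by move=> h; rewrite /coroot pairZr. Qed.

Lemma inv_pos al : al != 0 -> 0 < 2 / pair al al.
Proof. by move=> h; rewrite divr_gt0 ?ltr0n // pair_gt0. Qed.

Lemma coroot_refl al be : al != 0 -> coroot (refl al be) = refl al (coroot be).
Proof. by move=> h; rewrite /coroot reflZ pair_refl2. Qed.

Definition Sm al : 'M[F]_n := 1%:M - (coroot al)^T *m al.

Lemma mul_Sm al x : x *m Sm al = refl al x.
Proof.
rewrite /Sm mulmxBr mulmx1 mulmxA reflE; congr (_ - _).
rewrite [x *m _]mx11_scalar mul_scalar_mx; congr (_ *: _).
Qed.

Lemma rowmx_ext (A B : 'M[F]_n) : (forall x : V, x *m A = x *m B) -> A = B.
Proof. by move=> H; apply/row_matrixP => i; rewrite !rowE H. Qed.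

Lemma Sm_invol al : al != 0 -> Sm al *m Sm al = 1%:M.
Proof. by move=> h; apply: rowmx_ext => x; rewrite mulmxA !mul_Sm reflK // mulmx1. Qed.

Lemma Sm_tr al : (Sm al)^T = Sm al.
Proof.
rewrite /Sm linearB /= trmx1 trmx_mul trmxK /coroot; congr (_ - _).
rewrite linearZ /=. by rewrite [(_ *: al)^T]linearZ /= scalemxAl.
Qed.

Definition orth (M : 'M[F]_n) := M *m M^T == 1%:M.

Lemma pair_orth M x y : orth M -> pair (x *m M) (y *m M) = pair x y.
Proof.
move=> /eqP h; rewrite /pair trmx_mul -mulmxA (mulmxA M) h mul1mx //.
Qed.

Lemma orth_Sm al : al != 0 -> orth (Sm al).
Proof. by move=> h; rewrite /orth Sm_tr Sm_invol. Qed.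

Lemma orth_mul M N : orth M -> orth N -> orth (M *m N).
Proof.
rewrite /orth => /eqP hM /eqP hN; rewrite trmx_mul mulmxA -(mulmxA M) hN mulmx1 hM //.
Qed.

Lemma orth1 : orth 1%:M.
Proof. by rewrite /orth trmx1 mulmx1. Qed.

Lemma orth_tr M : orth M -> orth M^T.
Proof. by rewrite /orth trmxK => /eqP /mulmx1C ->. Qed.

Lemma orth_unit M : orth M -> M \in unitmx.
Proof. by move=> /eqP /mulmx1_unit []. Qed.

Lemma orth_inv M : orth M -> invmx M = M^T.
Proof.
move=> h; have hu := orth_unit h.
by rewrite -[invmx M]mulmx1 -(eqP h) mulmxA mulVmx // mul1mx.
Qed.

Lemma coroot_orth M al : orth M -> coroot (al *m M) = coroot al *m M.
Proof. by move=> h; rewrite /coroot pair_orth // scalemxAl. Qed.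

Lemma refl_orth M al x : orth M -> refl (al *m M) (x *m M) = refl al x *m M.
Proof.
move=> h; rewrite !reflE coroot_orth // pair_orth // mulmxBl scalemxAl //.
Qed.

End Refl.


Section Roots.
Variables (F : realFieldType) (n : nat).
Local Notation V := 'rV[F]_n.
Implicit Types x y z al be : V.
Variables (R : seq V) (v : V) (a : 'I_n -> V).
Hypotheses (hR : root_system R) (hreg : regular R v) (hsimp : simple_roots R v a).

Lemma R_uniq : uniq R. Proof. by case: hR. Qed.
Lemma R_neq0 al : al \in R -> al != 0.
Proof. by case: hR => _ [h0 _] hal; apply: contraNneq h0 => <-. Qed.
Lemma R_refl al be : al \in R -> be \in R -> refl al be \in R.
Proof. by case: hR => _ [_ [_ [h _]]]; apply: h. Qed.
Lemma R_int al be : al \in R -> be \in R -> exists z : int, pair be (coroot al) = z%:~R.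
Proof. by case: hR => _ [_ [_ [_ [h _]]]]; apply: h. Qed.
Lemma R_red al (c : F) : al \in R -> c *: al \in R -> c = 1 \/ c = -1.
Proof. by case: hR => _ [_ [_ [_ [_ [h _]]]]]; apply: h. Qed.
Lemma R_opp al : al \in R -> - al \in R.
Proof. by move=> h; rewrite -refl_self ?R_neq0 // R_refl. Qed.

Definition pos x := 0 < pair x v.

Lemma Rplus_mem x : (x \in Rplus R v) = (x \in R) && pos x.
Proof. by rewrite /Rplus mem_filter andbC. Qed.

Lemma pos_opp x : x \in R -> ~~ pos x = pos (- x).
Proof.
move=> hx; rewrite /pos pairNl oppr_gt0 -leNgt le_eqVlt.
by have := hreg hx => /negPf ->.
Qed.

Lemma a_simple j : is_simple R v (a j). Proof. by case: hsimp => _ h _; apply: h. Qed.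
Lemma a_Rplus j : a j \in Rplus R v. Proof. by case: (a_simple j). Qed.
Lemma a_R j : a j \in R. Proof. by have := a_Rplus j; rewrite Rplus_mem => /andP[]. Qed.
Lemma a_pos j : pos (a j). Proof. by have := a_Rplus j; rewrite Rplus_mem => /andP[]. Qed.
Lemma a_neq0 j : a j != 0. Proof. exact: R_neq0 (a_R j). Qed.

Definition nonprop x y := forall t : F, x != t *: y.

Lemma strict_CS x y : y != 0 -> nonprop x y -> pair x y ^+ 2 < pair x x * pair y y.
Proof.
move=> hy hnp; set t := pair x y / pair y y.
have hw : x - t *: y != 0 by rewrite subr_eq0 hnp.
have hyy : 0 < pair y y := pair_gt0 hy.
rewrite -subr_gt0.
have -> : pair x x * pair y y - pair x y ^+ 2 = pair y y * pair (x - t *: y) (x - t *: y).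
  rewrite pairBl !pairBr !pairZl !pairZr (pairC y x) /t.
  by field; rewrite gt_eqF.
by rewrite mulr_gt0 // pair_gt0.
Qed.

Lemma subtract al be : al \in R -> be \in R -> nonprop al be ->
  0 < pair al (coroot be) -> al - be \in R.
Proof.
move=> ha hb hnp hpos.
have nb := R_neq0 hb; have na := R_neq0 ha.
have [z1 hz1] := R_int hb ha; have [z2 hz2] := R_int ha hb.
have hpab : 0 < pair al be.
  by move: hpos; rewrite pair_coroot_sign // pmulr_rgt0 // inv_pos.
have hz2p : 0 < pair be (coroot al).
  by rewrite pair_coroot_sign // pmulr_rgt0 ?inv_pos // pairC.
have hcs := strict_CS nb hnp.
have hprod : z1%:~R * z2%:~R < 4 :> F.
  rewrite -hz1 -hz2 !pair_coroot_sign // (pairC be al).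
  have haa := pair_gt0 na; have hbb := pair_gt0 nb.
  have -> : 2 / pair be be * pair al be * (2 / pair al al * pair al be)
      = 4 * (pair al be ^+ 2 / (pair al al * pair be be)).
    by field; rewrite ?gt_eqF.
  rewrite -[X in _ < X]mulr1 ltr_pM2l ?ltr0n //.
  by rewrite ltr_pdivrMr ?mulr_gt0 // mul1r.
rewrite -intrM in hprod.
have z1p : (0 < z1)%R by rewrite -(ltr0z F) -hz1.
have z2p : (0 < z2)%R by rewrite -(ltr0z F) -hz2.
have hz : (z1 * z2 < 4)%R by rewrite -(ltr_int F).
have [e1|e2] : z1 = 1 \/ z2 = 1 by lia.
  by have := R_refl hb ha; rewrite reflE hz1 e1 scale1r.
have := R_opp (R_refl ha hb); rewrite reflE hz2 e2 scale1r opprB //.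
Qed.


Lemma nonprop_shift x j (t : F) : nonprop x (a j) -> nonprop (x - t *: a j) (a j).
Proof.
move=> h s; apply/eqP => e; move/eqP: (h (s + t)); apply.
by rewrite scalerDl -e subrK.
Qed.

Lemma Kaux j (c : nat) : forall al be, al \in R -> be \in R -> pos al -> pos be ->
  nonprop al (a j) -> nonprop be (a j) -> al + be = c%:R *: a j -> False.
Proof.
elim: c => [|c IH] al be ha hb pa pb npa npb.
  rewrite scale0r => /eqP; rewrite addr_eq0 => /eqP e.
  by move: pa; rewrite e -pos_opp // pb.
have step : forall al be, al \in R -> be \in R -> pos al -> pos be ->
    nonprop al (a j) -> nonprop be (a j) -> al + be = c.+1%:R *: a j ->
    0 < pair al (coroot (a j)) -> False.
  move=> x y hx hy px py npx npy e hp.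
  have hsub := subtract hx (a_R j) (npx) hp.
  case pxa : (pos (x - a j)).
    apply: (IH (x - a j) y) => //.
      by have := nonprop_shift 1 npx; rewrite scale1r.
    by rewrite addrAC e -[c.+1]addn1 natrD scalerDl scale1r addrK.
  have h2 : pos (a j - x) by rewrite -opprB -pos_opp // pxa.
  case: (a_simple j) => _; apply; exists x, (a j - x); split.
  - by rewrite Rplus_mem hx px.
  - by rewrite Rplus_mem h2 -opprB R_opp.
  - by rewrite addrC subrK.
move=> e.
have hsum : 0 < pair al (coroot (a j)) + pair be (coroot (a j)).
  rewrite -pairDl e pairZl pair_coroot ?a_neq0 //.
  by rewrite mulr_gt0 ?ltr0n.
case: (ltrP 0 (pair al (coroot (a j)))) => hp; first exact: (step al be).
apply: (step be al) => //; first by rewrite addrC.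
by move: hsum hp; set p := pair al _; set q := pair be _; lra.
Qed.

Lemma nonprop_a j al : al \in R -> pos al -> al != a j -> nonprop al (a j).
Proof.
move=> ha pa hne t; apply/eqP => e.
have htj : t *: a j \in R by rewrite -e.
have [t1|t1] := R_red (a_R j) htj.
  by move/eqP: hne; apply; rewrite e t1 scale1r.
by move: pa; rewrite e t1 scaleN1r -pos_opp ?a_R // a_pos.
Qed.

Lemma refl_pos j al : al \in R -> pos al -> al != a j -> pos (refl (a j) al).
Proof.
move=> ha pa hne; have hrr := R_refl (a_R j) ha.
case p: (pos (refl (a j) al)) => //; exfalso.
have pb : pos (- refl (a j) al) by rewrite -pos_opp // p.
have [z hz] := R_int (a_R j) ha.
have e : al + - refl (a j) al = z%:~R *: a j by rewrite reflE hz opprB addrC subrK.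
have zp : 0 < z%:~R :> F.
  have : 0 < pair (al + - refl (a j) al) v by rewrite pairDl addr_gt0.
  by rewrite e pairZl (pmulr_lgt0 _ (a_pos j)).
have npa := nonprop_a ha pa hne.
have npb : nonprop (- refl (a j) al) (a j).
  move=> t; apply/eqP => e2; move/eqP: (npa (z%:~R - t)); apply.
  by rewrite scalerBl -e2 -e addrK.
move: zp e; rewrite ltr0z; clear hz; case: z => [c|c] // _ e.
exact: (Kaux ha (R_opp hrr) pa pb npa npb e).
Qed.
End Roots.


Section Words.
Variables (F : realFieldType) (n : nat).
Local Notation V := 'rV[F]_n.
Implicit Types x y z al be : V.
Variables (R : seq V) (v : V) (a : 'I_n -> V).
Hypotheses (hR : root_system R) (hreg : regular R v) (hsimp : simple_roots R v a).

Definition WM (u : seq 'I_n) : 'M[F]_n := (wordW a u).1.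

Lemma wordW_eq u : wordW a u = (WM u, 0).
Proof.
rewrite /WM; elim: u => [|j u IH] //=.
by rewrite {1}IH /mulW /= mul0mx add0r.
Qed.

Lemma WM_nil : WM [::] = 1%:M. Proof. by []. Qed.
Lemma WM_cons j u : WM (j :: u) = WM u *m Sm (a j). Proof. by []. Qed.
Lemma WM_cat u1 u2 : WM (u1 ++ u2) = WM u2 *m WM u1.
Proof.
elim: u1 => [|j u IH]; first by rewrite WM_nil mulmx1.
by rewrite cat_cons !WM_cons IH mulmxA.
Qed.
Lemma WM_rcons u j : WM (rcons u j) = Sm (a j) *m WM u.
Proof. by rewrite -cats1 WM_cat WM_cons WM_nil mul1mx. Qed.

Lemma WM_orth u : orth (WM u).
Proof.
elim: u => [|j u IH]; first exact: orth1.
by rewrite WM_cons orth_mul // orth_Sm // (a_neq0 hR hsimp).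
Qed.

Lemma WM_tr u : (WM u)^T = WM (rev u).
Proof.
elim: u => [|j u IH]; first by rewrite WM_nil trmx1.
by rewrite WM_cons trmx_mul IH Sm_tr rev_cons WM_rcons.
Qed.

Lemma WM_R u x : x \in R -> x *m WM u \in R.
Proof.
elim: u x => [|j u IH] x hx; first by rewrite WM_nil mulmx1.
by rewrite WM_cons mulmxA mul_Sm (R_refl hR) ?(a_R hsimp) ?IH.
Qed.

Lemma act_wordW u x : act (wordW a u) x = x *m WM u.
Proof. by rewrite wordW_eq /act /= addr0. Qed.

Lemma WM_rev_K u x : x *m WM u *m WM (rev u) = x.
Proof.
rewrite -mulmxA -WM_tr; have /eqP -> := WM_orth u; exact: mulmx1.
Qed.
Lemma WM_K_rev u x : x *m WM (rev u) *m WM u = x.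
Proof. by have := WM_rev_K (rev u) x; rewrite revK. Qed.


Definition Rp := Rplus R v.
Lemma Rp_uniq : uniq Rp. Proof. exact/filter_uniq/(R_uniq hR). Qed.

Lemma rem_Rp_mem j x : (x \in rem (a j) Rp) = (x != a j) && (x \in Rp).
Proof. by rewrite (mem_rem_uniq _ Rp_uniq) inE. Qed.

Lemma refl_rem j y : y \in rem (a j) Rp -> refl (a j) y \in rem (a j) Rp.
Proof.
rewrite !rem_Rp_mem !(Rplus_mem R) => /and3P [hne hy py].
have hr := R_refl hR (a_R hsimp j) hy.
rewrite hr (refl_pos hR hreg hsimp) //= andbT; apply/eqP => e.
have : refl (a j) (refl (a j) y) = refl (a j) (a j) by rewrite e.
rewrite reflK ?(a_neq0 hR hsimp) // refl_self ?(a_neq0 hR hsimp) // => ey.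
by move: py; rewrite ey -(pos_opp hreg) ?(a_pos hsimp) ?(a_R hsimp).
Qed.

Lemma perm_reflj j : perm_eq (map (refl (a j)) (rem (a j) Rp)) (rem (a j) Rp).
Proof.
have hK := reflK (a_neq0 hR hsimp j).
apply: uniq_perm.
- by rewrite (map_inj_uniq (inv_inj hK)) rem_uniq // Rp_uniq.
- by rewrite rem_uniq // Rp_uniq.
move=> x; apply/mapP/idP => [[y hy ->]|hx]; first exact: refl_rem.
by exists (refl (a j) x); rewrite ?hK // refl_rem.
Qed.

Definition cnt (M : 'M[F]_n) := count (fun al => ~~ pos v (al *m M)) Rp.

Lemma cnt_split j M : cnt M = count (fun al => ~~ pos v (al *m M)) (rem (a j) Rp) + ~~ pos v (a j *m M).
Proof.
rewrite /cnt (permP (perm_to_rem (a_Rplus hsimp j))) /= addnC.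
by [].
Qed.

Lemma cnt_step j M : (forall x, x \in R -> x *m M \in R) ->
  cnt (Sm (a j) *m M) = count (fun al => ~~ pos v (al *m M)) (rem (a j) Rp) + pos v (a j *m M).
Proof.
move=> hM; rewrite (cnt_split j) mulmxA mul_Sm refl_self ?(a_neq0 hR hsimp) //.
rewrite mulNmx -(pos_opp hreg) ?hM ?(a_R hsimp) // negbK; congr (_ + _).
rewrite -(permP (perm_reflj j)) count_map; apply: eq_count => x /=.
by rewrite mulmxA mul_Sm reflK ?(a_neq0 hR hsimp).
Qed.

Lemma cnt_rcons u j : cnt (WM (rcons u j)) = (cnt (WM u) - ~~ pos v (a j *m WM u) + pos v (a j *m WM u))%N.
Proof.
rewrite WM_rcons cnt_step; last by move=> x; apply: WM_R.
by rewrite (cnt_split j) addnK.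
Qed.

Lemma cnt_nil : cnt (WM [::]) = 0%N.
Proof.
rewrite WM_nil /cnt; apply/eqP; rewrite -leqn0 leqNgt -has_count; apply/hasP => -[x].
by rewrite (Rplus_mem R) mulmx1 => /andP[_ ->].
Qed.

Lemma cnt_le u : (cnt (WM u) <= size u)%N.
Proof.
elim/last_ind: u => [|u j IH]; first by rewrite cnt_nil.
rewrite cnt_rcons size_rcons; case: (pos v _) => /=; lia.
Qed.


Lemma count_inj_le (T : eqType) (s1 s2 : seq T) (P1 P2 : pred T) (f : T -> T) :
  uniq s1 -> uniq s2 -> injective f ->
  (forall t : T, t \in s1 -> P1 t -> (f t \in s2) && P2 (f t)) -> (count P1 s1 <= count P2 s2)%N.
Proof.
move=> u1 u2 fi H; rewrite -!size_filter -(size_map f).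
apply: uniq_leq_size; first by rewrite (map_inj_uniq fi) filter_uniq.
move=> y /mapP [t]; rewrite mem_filter => /andP [pt ht] ->.
by rewrite mem_filter; case/andP: (H t ht pt) => -> ->.
Qed.

Lemma cnt_rev_le u : (cnt (WM u) <= cnt (WM (rev u)))%N.
Proof.
apply: (@count_inj_le _ _ _ _ _ (fun al => - (al *m WM u))); try exact: Rp_uniq.
  by move=> x y /= /oppr_inj /(congr1 (mulmx^~ (WM (rev u)))); rewrite !WM_rev_K.
move=> x; rewrite (Rplus_mem R) => /andP [hx px] nx.
rewrite (Rplus_mem R) R_opp ?WM_R //= -(pos_opp hreg) ?WM_R // nx /=.
by rewrite mulNmx WM_rev_K -(pos_opp hreg) // px.
Qed.

Lemma cnt_rev u : cnt (WM (rev u)) = cnt (WM u).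
Proof. by apply/eqP; rewrite eqn_leq cnt_rev_le -{2}(revK u) cnt_rev_le. Qed.

Lemma exch p g : g \in R -> pos v g -> ~~ pos v (g *m WM p) ->
  exists p1 i p2, p = p1 ++ i :: p2 /\ g *m WM p2 = a i.
Proof.
elim: p => [|i0 p IH] hg pg; first by rewrite WM_nil mulmx1 pg.
rewrite WM_cons mulmxA mul_Sm => hn.
case pp: (pos v (g *m WM p)).
  have : g *m WM p = a i0.
    apply/eqP; apply: contraNT hn => hne.
    by rewrite (refl_pos hR hreg hsimp) ?WM_R.
  by move=> e; exists [::], i0, p.
have [p1 [i [p2 [-> e]]]] := IH hg pg (negbT pp).
by exists (i0 :: p1), i, p2.
Qed.

Lemma delete p j : ~~ pos v (a j *m WM p) ->
  exists p', size p' = (size p).-1 /\ WM (rcons p j) = WM p'.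
Proof.
move=> hn; have [p1 [i [p2 [ep e]]]] := exch (a_R hsimp j) (a_pos hsimp j) hn.
exists (p1 ++ p2); split; first by rewrite ep !size_cat /= addnS.
rewrite WM_rcons ep WM_cat WM_cons WM_cat !mulmxA; congr (_ *m _).
apply: rowmx_ext => x; rewrite !mulmxA !mul_Sm -e refl_orth ?WM_orth //.
by rewrite reflK ?(a_neq0 hR hsimp).
Qed.

Lemma find_bad u : (cnt (WM u) < size u)%N ->
  exists p j s, u = p ++ j :: s /\ ~~ pos v (a j *m WM p).
Proof.
elim/last_ind: u => [|u j IH]; first by rewrite cnt_nil.
rewrite cnt_rcons size_rcons.
case pj: (pos v (a j *m WM u)) => /= h; last by exists u, j, [::]; rewrite cats1 pj.
have [|p [j' [s [-> hb]]]] := IH; first lia.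
by exists p, j', (rcons s j); rewrite rcons_cat.
Qed.

Lemma reduced u : exists u', WM u' = WM u /\ size u' = cnt (WM u').
Proof.
move: {2}(size u) (leqnn (size u)) => N; elim: N u => [|N IH] u hs.
  by exists u; split => //; move: (cnt_le u); lia.
have := cnt_le u; rewrite leq_eqVlt => /orP [/eqP e|hlt]; first by exists u.
have [p [j [s [eu hb]]]] := find_bad hlt.
have [p' [hp' ep']] := delete hb.
have [|u' [e1 e2]] := IH (p' ++ s).
  by move: hs; rewrite eu !size_cat hp' /=; case: (size p) => /=; lia.
exists u'; split => //; rewrite e1 eu -cat_rcons !WM_cat ep' //.
Qed.

End Words.


Section Len.
Variables (F : realFieldType) (n : nat).
Local Notation V := 'rV[F]_n.
Implicit Types x y z al be : V.
Variables (R : seq V) (v : V) (a : 'I_n -> V).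
Hypotheses (hR : root_system R) (hreg : regular R v) (hsimp : simple_roots R v a).

Lemma pair_mulmx x y (M : 'M[F]_n) : pair (x *m M) y = pair x (y *m M^T).
Proof. by rewrite /pair trmx_mul trmxK mulmxA. Qed.

Lemma coroot_opp al : coroot (- al) = - coroot al.
Proof. by rewrite /coroot pairNl pairNr opprK scalerN. Qed.

Lemma pos_coroot x al : al \in R -> pos v al -> 0 < pair v (coroot al).
Proof.
move=> ha pa; rewrite pair_coroot_sign ?(R_neq0 hR) // mulr_gt0 ?inv_pos ?(R_neq0 hR) //.
by rewrite pairC.
Qed.

Lemma inA_ex : exists x0, inA R v x0.
Proof.
pose c al := pair v (coroot al).
pose S := \sum_(al <- Rp R v) c al.
have cpos : forall al, al \in Rp R v -> 0 < c al.
  by move=> al; rewrite (Rplus_mem R) => /andP [h1 h2]; apply: pos_coroot.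
have S0 : 0 <= S by rewrite /S big_seq sumr_ge0 // => al /cpos /ltW.
exists ((1 + S)^-1 *: v) => al hal; rewrite pairZl.
have h1S : 0 < 1 + S by rewrite ltr_wpDr.
rewrite mulr_gt0 ?invr_gt0 ?cpos //= mulrC ltr_pdivrMr // mul1r.
have hr : 0 <= \sum_(b <- rem al (Rp R v)) c b.
  by rewrite big_seq sumr_ge0 // => b /(mem_rem) /cpos /ltW.
rewrite /S (big_rem _ hal) /=; move: hr; set t := \sum_(_ <- _) _; set ca := c al; rewrite -/(c al) -/ca; lra.
Qed.

Lemma A_root x be : inA R v x -> be \in R ->
  if pos v be then 0 < pair x (coroot be) < 1 else -1 < pair x (coroot be) < 0.
Proof.
move=> hx hb; case pb: (pos v be); first by apply: hx; rewrite (Rplus_mem R) hb pb.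
have : - be \in Rp R v by rewrite (Rplus_mem R) R_opp // -(pos_opp hreg) // pb.
move/hx; rewrite coroot_opp pairNr => /andP [h1 h2].
by rewrite ltrNl h2 /= oppr_gt0 in h1 *; rewrite h1.
Qed.

Lemma sep_aux (p q : F) (k : int) : 0 < p -> p < 1 -> -1 < q -> q < 1 ->
  (p - k%:~R) * (q - k%:~R) < 0 -> k = 0 /\ q < 0.
Proof.
move=> h1 h2 h3 h4 h.
have : (k = 0 \/ 0 < k \/ k < 0)%R by lia.
case=> [ek|[kp|kn]].
- by split => //; move: h; rewrite ek subr0 subr0 pmulr_rlt0.
- have k1 : (1 : F) <= k%:~R by rewrite ler1z; lia.
  exfalso; move: h; set K := k%:~R; nra.
- have k1 : k%:~R <= (-1 : F).
    by have : (k%:~R <= (- 1)%:~R :> F) by rewrite ler_int; lia.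

  exfalso; move: h; set K := k%:~R; nra.
Qed.

Lemma sep_iff u al k : al \in Rp R v ->
  separates R v (wordW a u) al k <-> (k = 0 /\ ~~ pos v (al *m WM a (rev u))).
Proof.
move=> hal; have ha : al \in R by move: hal; rewrite (Rplus_mem R) => /andP [].
have hb := WM_R hR hsimp (rev u) ha.
have eq x : pair (act (wordW a u) x) (coroot al) = pair x (coroot (al *m WM a (rev u))).
  by rewrite act_wordW pair_mulmx WM_tr coroot_orth // (WM_orth hR hsimp).
have [x0 hx0] := inA_ex.
split.
  move=> /(_ x0 hx0); rewrite eq.
  have := hx0 al hal; have := A_root hx0 hb.
  case pb: (pos v _) => /andP [h1 h2] /andP [h3 h4] h.
    have h1' : -1 < pair x0 (coroot (al *m WM a (rev u))) by apply: lt_trans h1; rewrite ltrN10.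
    by have [_ hq] := sep_aux h3 h4 h1' h2 h; move: hq; rewrite lt_gtF.
  by have [ek hq] := sep_aux h3 h4 h1 (lt_trans h2 ltr01) h.
move=> [-> np] x hx; rewrite eq subr0.
have := hx al hal; have := A_root hx hb; rewrite (negPf np) => /andP [_ h2] /andP [h3 _].
by rewrite subr0 pmulr_rlt0.
Qed.


Lemma length_is_uniq w m1 m2 : length_is R v w m1 -> length_is R v w m2 -> m1 = m2.
Proof.
move=> [s1 [u1 <- h1]] [s2 [u2 <- h2]]; apply: perm_size; apply: uniq_perm => // p.
by apply/idP/idP => [/h1 /h2|/h2 /h1].
Qed.

Lemma len_spec w m : length_is R v w m -> len R v w = m.
Proof.
move=> h; apply: (length_is_uniq (w := w)) => //.
by apply: (epsilon_spec (inhabits 0%N) (length_is R v w)); exists m.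
Qed.

Lemma len_word u : len R v (wordW a u) = cnt R v (WM a u).
Proof.
apply: len_spec.
exists [seq (al, 0%Z) | al <- filter (fun al => ~~ pos v (al *m WM a (rev u))) (Rp R v)].
split.
- rewrite map_inj_uniq; last by move=> x y [].
  by apply: filter_uniq; apply: Rp_uniq.
- by rewrite size_map size_filter -(cnt_rev hR hreg hsimp).
move=> [al k] /=; split.
  move=> /mapP [b]; rewrite mem_filter => /andP [nb hb] [-> ->].
  by split => //; apply/(sep_iff u 0%Z hb).
move=> [hal /(sep_iff u k hal) [-> nb]].
by apply/mapP; exists al => //; rewrite mem_filter nb hal.
Qed.

End Len.


Section Weyl.
Variables (F : realFieldType) (n : nat).
Local Notation V := 'rV[F]_n.
Implicit Types x y z al be : V.
Variables (R : seq V) (v : V) (a : 'I_n -> V).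
Hypotheses (hR : root_system R) (hreg : regular R v) (hsimp : simple_roots R v a).

Lemma lenW u : len R v (wordW a u) = cnt R v (WM a u).
Proof. exact: len_word. Qed.

Lemma len_le u : (len R v (wordW a u) <= size u)%N.
Proof. by rewrite lenW cnt_le. Qed.

Lemma invW_word u : invW (wordW a u) = wordW a (rev u).
Proof.
rewrite /invW !wordW_eq /= orth_inv ?(WM_orth hR hsimp) // WM_tr mul0mx oppr0 //.
Qed.

Lemma len_inv u : len R v (invW (wordW a u)) = len R v (wordW a u).
Proof. by rewrite invW_word !lenW (cnt_rev hR hreg hsimp). Qed.

Lemma reduced_word u : exists u', wordW a u' = wordW a u /\ size u' = len R v (wordW a u').
Proof.
have [u' [e1 e2]] := reduced hR hreg hsimp u.
by exists u'; split; [rewrite !wordW_eq e1 | rewrite lenW].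
Qed.

Lemma inW0_word (w : aff F n) : inW0 a w.1 -> w.2 = 0 -> exists u, w = wordW a u.
Proof.
case: w => M mu /= [u ->] ->; exists u; by rewrite wordW_eq.
Qed.

Lemma inW0_wordW u : inW0 a (wordW a u).1. Proof. by exists u. Qed.

Lemma count_lt (T : eqType) (s : seq T) (P Q : pred T) :
  (forall t, t \in s -> P t -> Q t) -> (exists2 t, t \in s & Q t && ~~ P t) ->
  (count P s < count Q s)%N.
Proof.
move=> hPQ [t ht htq].
have e : count Q s = count (predI Q P) s + count (predI Q (predC P)) s.
  by elim: s {ht hPQ} => //= x s ->; case: (Q x); case: (P x) => /=; lia.
have e2 : count (predI Q P) s = count P s.
  apply: eq_in_count => y hy /=; case py: (P y); last by rewrite andbF.
  by rewrite hPQ.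
have : (0 < count (predI Q (predC P)) s)%N by rewrite -has_count; apply/hasP; exists t.
lia.
Qed.

Lemma neg_coroot x al : al \in R -> (pair x (coroot al) < 0) = (pair x al < 0).
Proof.
move=> ha; rewrite pair_coroot_sign ?(R_neq0 hR) //.
by rewrite pmulr_rlt0 // inv_pos // (R_neq0 hR).
Qed.

Lemma simple_neg x al : al \in Rp R v -> pair x (coroot al) < 0 ->
  exists j, pair x (coroot (a j)) < 0.
Proof.
move: {2}(count (fun b => pair b v < pair al v) (Rp R v)).+1 (ltnSn (count (fun b => pair b v < pair al v) (Rp R v))) => N.
elim: N al => [|N IH] al hN hal hx //.
have ha : al \in R by move: hal; rewrite (Rplus_mem R) => /andP[].
case: (classic (is_simple R v al)) => [hs|hns].
  by case: hsimp => _ _ /(_ al hs) [j ej]; exists j; rewrite ej.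
have [b1 [b2 [h1 h2 e]]] : exists b1 b2, [/\ b1 \in Rplus R v, b2 \in Rplus R v & al = b1 + b2].
  by apply: NNPP => hne; apply: hns; split.
have hb1 : b1 \in R by move: h1; rewrite (Rplus_mem R) => /andP[].
have hb2 : b2 \in R by move: h2; rewrite (Rplus_mem R) => /andP[].
have p1 : 0 < pair b1 v by move: h1; rewrite (Rplus_mem R) => /andP[].
have p2 : 0 < pair b2 v by move: h2; rewrite (Rplus_mem R) => /andP[].
move: hx; rewrite neg_coroot // e pairDr => hx.
have step : forall b b', b \in Rp R v -> b \in R -> 0 < pair b' v -> al = b + b' ->
    pair x b < 0 -> exists j, pair x (coroot (a j)) < 0.
  move=> b b' hbp hb pb' eb hxb; apply: (IH b) => //; last by rewrite neg_coroot.
  rewrite -ltnS; apply: leq_trans hN; rewrite ltnS; apply: count_lt.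
    by move=> t _ /= ht; rewrite eb pairDl (lt_le_trans ht) // lerDl ltW.
  by exists b => //=; rewrite ltxx andbT eb pairDl ltrDl.
case: (ltrP (pair x b1) 0) => hx1; first exact: (step b1 b2).
apply: (step b2 b1) => //; first by rewrite e addrC.
move: hx hx1; set p := pair x b1; set q := pair x b2; lra.
Qed.


Definition Ndom x := count (fun al => pair x (coroot al) < 0) (Rp R v).

Lemma N_refl j x : pair x (coroot (a j)) < 0 -> (Ndom (refl (a j) x) < Ndom x)%N.
Proof.
move=> hx; rewrite /Ndom !(permP (perm_to_rem (a_Rplus hsimp j))) /= hx.
have -> : pair (refl (a j) x) (coroot (a j)) < 0 = false.
  rewrite reflE pairBl pairZl pair_coroot ?(a_neq0 hR hsimp) //.
  apply/negbTE; rewrite -leNgt; move: hx; set p := pair x _; lra.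
rewrite add0n add1n ltnS -(permP (perm_reflj hR hreg hsimp j)) count_map.
apply: eq_leq; apply: eq_count => b /=.
by rewrite pair_refl coroot_refl ?(a_neq0 hR hsimp) // reflK ?(a_neq0 hR hsimp).
Qed.

Lemma dom_exists x : exists u, dominant R v (x *m WM a u).
Proof.
move: {2}(Ndom x).+1 (ltnSn (Ndom x)) => N; elim: N x => [|N IH] x hN //.
case: (classic (dominant R v x)) => [hd|hnd]; first by exists [::]; rewrite WM_nil mulmx1.
have [al [hal hx]] : exists al, al \in Rplus R v /\ pair x (coroot al) < 0.
  apply: NNPP => hne; apply: hnd => al hal; rewrite leNgt; apply/negP => h.
  by apply: hne; exists al.
have [j hj] := simple_neg hal hx.
have [|u hu] := IH (refl (a j) x); first by have := N_refl hj; lia.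
by exists (rcons u j); rewrite WM_rcons mulmxA mul_Sm.
Qed.

Lemma wl_spec x : is_wl R v a x (wl R v a x).
Proof.
apply: (epsilon_spec (inhabits (idW F n)) (is_wl R v a x)).
pose P m := exists u, dominant R v (act (wordW a u) x) /\ len R v (wordW a u) = m.
have hP : exists m, P m.
  by have [u hu] := dom_exists x; exists (len R v (wordW a u)), u; rewrite act_wordW.
pose Pb m : bool := if excluded_middle_informative (P m) then true else false.
have PbP m : Pb m <-> P m by rewrite /Pb; case: excluded_middle_informative.
have hPb : exists m, Pb m by case: hP => m hm; exists m; apply/PbP.
case: (ex_minnP hPb) => m /PbP [u [hd hl]] hmin.
exists (wordW a u); split => //; first exact: inW0_wordW.
  by rewrite wordW_eq.
move=> w' h1 h2 h3; have [u' eu'] := inW0_word h1 h2.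
by rewrite hl; apply: hmin; apply/PbP; exists u'; rewrite -eu'.
Qed.

End Weyl.


Section QF.
Variables (F : realFieldType) (n : nat).
Local Notation V := 'rV[F]_n.
Implicit Types x y z al be : V.
Variables (R : seq V) (v : V) (a : 'I_n -> V).
Hypotheses (hR : root_system R) (hreg : regular R v) (hsimp : simple_roots R v a).

Definition Q x := \sum_(be <- R) pair x (coroot be) ^+ 2.

Lemma perm_reflR al : al \in R -> perm_eq (map (refl al) R) R.
Proof.
move=> ha; have hK := reflK (R_neq0 hR ha).
apply: uniq_perm.
- by rewrite (map_inj_uniq (inv_inj hK)) (R_uniq hR).
- exact: (R_uniq hR).
move=> x; apply/mapP/idP => [[y hy ->]|hx]; first exact: R_refl.
by exists (refl al x); rewrite ?hK // R_refl.
Qed.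

Lemma Q_refl al x : al \in R -> Q (refl al x) = Q x.
Proof.
move=> ha; rewrite /Q -(perm_big _ (perm_reflR ha)) big_map.
by apply: eq_bigr => be _; rewrite pair_refl coroot_refl ?(R_neq0 hR ha) // reflK ?(R_neq0 hR ha).
Qed.

Lemma Q_word u x : Q (x *m WM a u) = Q x.
Proof.
elim: u x => [|j u IH] x; first by rewrite WM_nil mulmx1.
by rewrite WM_cons mulmxA mul_Sm Q_refl ?(a_R hsimp) ?IH.
Qed.

Lemma Q_expand x y t : Q (x - t *: y) =
  Q x - 2 * t * (\sum_(be <- R) pair x (coroot be) * pair y (coroot be))
      + t ^+ 2 * (\sum_(be <- R) pair y (coroot be) ^+ 2).
Proof.
rewrite /Q mulr_sumr mulr_sumr -sumrB -big_split /=.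
by apply: eq_bigr => be _; rewrite pairBl pairZl; ring.
Qed.

Lemma Q_interior j x t : t * (t - pair x (coroot (a j))) < 0 ->
  Q (x - t *: a j) < Q x.
Proof.
set m := pair x (coroot (a j)) => ht.
pose B := \sum_(be <- R) pair x (coroot be) * pair (a j) (coroot be).
pose A := \sum_(be <- R) pair (a j) (coroot be) ^+ 2.
have Apos : 0 < A.
  rewrite /A (big_rem _ (a_R hsimp j)) /= pair_coroot ?(a_neq0 hR hsimp) //.
  have h4 : (0 : F) < 2 ^+ 2 by rewrite expr2 mulr_gt0 ?ltr0n.
  by rewrite ltr_pwDl ?sumr_ge0 // => b _; exact: sqr_ge0.
have hm : Q (x - m *: a j) = Q x by rewrite -reflE Q_refl ?(a_R hsimp).
have mne : m != 0 by apply/eqP => m0; move: ht; rewrite m0 subr0 -expr2 ltNge sqr_ge0.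
move: hm; rewrite !Q_expand -/B -/A => hm.
have e : 2 * B = m * A.
  apply: (mulfI mne); move: hm => /eqP; rewrite -subr_eq0 => /eqP hm.
  by rewrite -[RHS]subr0 -hm; ring.
rewrite -subr_lt0; have -> : Q x - 2 * t * B + t ^+ 2 * A - Q x = A * (t * (t - m)).
  by rewrite [2 * t]mulrC -mulrA e; ring.
by rewrite pmulr_rlt0.
Qed.

End QF.

Section QNat.
Variables (F : realFieldType) (n : nat).
Local Notation V := 'rV[F]_n.
Implicit Types x y z al be : V.
Variables (R : seq V) (v : V) (a : 'I_n -> V).
Hypotheses (hR : root_system R) (hreg : regular R v) (hsimp : simple_roots R v a).

Lemma Q_int x : inP R x -> exists N : int, Q R x = N%:~R.
Proof.
move=> hx; rewrite /Q.
have : {subset R <= R} by [].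
elim: {-2}R => [|be s IH] hs; first by exists 0; rewrite big_nil.
have [|N eN] := IH; first by move=> y hy; apply: hs; rewrite inE hy orbT.
have [z ez] := hx be (hs be (mem_head _ _)).
by exists (z ^+ 2 + N); rewrite big_cons eN ez intrD rmorphXn.
Qed.

Lemma Q_ge0 x : 0 <= Q R x.
Proof. by rewrite /Q sumr_ge0 // => b _; exact: sqr_ge0. Qed.

Lemma toZ_spec (t : F) : (exists z : int, t = z%:~R) -> t = (toZ t)%:~R.
Proof. by move=> h; apply: (epsilon_spec (inhabits 0) (fun z : int => t = z%:~R)). Qed.

Definition qk x : nat := `|toZ (Q R x)|%N.

Lemma qk_lt x y : inP R x -> inP R y -> (Q R x < Q R y) = (qk x < qk y)%N.
Proof.
move=> hx hy; have ex := toZ_spec (Q_int hx); have ey := toZ_spec (Q_int hy).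
have := Q_ge0 x; have := Q_ge0 y.
rewrite /qk; set zx := toZ (Q R x); set zy := toZ (Q R y).
rewrite ex ey !ler0z ltr_int => h1 h2.
by apply/idP/idP; lia.
Qed.

Lemma qk_eq x y : inP R x -> inP R y -> Q R x = Q R y -> qk x = qk y.
Proof. by move=> hx hy e; rewrite /qk e. Qed.

End QNat.


Section Hecke.
Variables (F : realFieldType) (n : nat).
Local Notation V := 'rV[F]_n.
Implicit Types x y z al be : V.
Variables (R : seq V) (v : V) (a : 'I_n -> V).
Hypotheses (hR : root_system R) (hreg : regular R v) (hsimp : simple_roots R v a).

Lemma inP_refl al x : al \in R -> inP R x -> inP R (refl al x).
Proof.
move=> ha hx be hb; rewrite pair_refl -coroot_refl ?(R_neq0 hR ha) //.
by apply: hx; apply: R_refl.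
Qed.

Lemma inP_root al : al \in R -> inP R al.
Proof. by move=> ha be hb; apply: (R_int hR hb ha). Qed.

Lemma inP_add x y : inP R x -> inP R y -> inP R (x + y).
Proof.
move=> hx hy be hb; have [z1 e1] := hx be hb; have [z2 e2] := hy be hb.
by exists (z1 + z2); rewrite pairDl e1 e2 intrD.
Qed.

Lemma inP_scale (k : int) x : inP R x -> inP R (k%:~R *: x).
Proof.
move=> hx be hb; have [z e] := hx be hb.
by exists (k * z); rewrite pairZl e intrM.
Qed.

Lemma inP_word u x : inP R x -> inP R (x *m WM a u).
Proof.
elim: u x => [|j u IH] x hx; first by rewrite WM_nil mulmx1.
by rewrite WM_cons mulmxA mul_Sm; apply: inP_refl; [apply: (a_R hsimp) | apply: IH].
Qed.

Lemma inP_subk x j (k : nat) : inP R x -> inP R (x - k%:R *: a j).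
Proof.
move=> hx; apply: inP_add => //; rewrite -scaleNr -[k%:R]/((k%:Z)%:~R) -intrN.
by apply: inP_scale; apply: inP_root; apply: (a_R hsimp).
Qed.

Lemma inP_addk x j (k : nat) : inP R x -> inP R (x + k%:R *: a j).
Proof.
move=> hx; apply: inP_add => //; rewrite -[k%:R]/((k%:Z)%:~R).
by apply: inP_scale; apply: inP_root; apply: (a_R hsimp).
Qed.

Lemma mkW_val (la : weight R) : mkW R (proj1_sig la) = la.
Proof.
case: la => x h; rewrite /mkW /=; case: excluded_middle_informative => // h'.
by congr exist; apply: proof_irrelevance.
Qed.

Lemma val_mkW x : inP R x -> proj1_sig (mkW R x) = x.
Proof. by rewrite /mkW; case: excluded_middle_informative. Qed.

Lemma act_sref j x : act (sref a j) x = refl (a j) x.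
Proof. by rewrite /act /= addr0 -mul_Sm. Qed.

End Hecke.

Section Hecke2.
Variables (F : realFieldType) (n : nat).
Local Notation V := 'rV[F]_n.
Implicit Types x y z al be : V.
Variables (R : seq V) (v : V) (a : 'I_n -> V).
Hypotheses (hR : root_system R) (hreg : regular R v) (hsimp : simple_roots R v a).
Variables (K : fieldExtType F) (q : aff F n -> F).
Hypothesis hq : forall j, qj q a j != 0.

Definition dep (phi : CP K R -> K) (D : V -> Prop) :=
  forall f g : CP K R, (forall y, inP R y -> D y -> f (mkW R y) = g (mkW R y)) -> phi f = phi g.

Lemma scal3 (qq : F) (X : K) : qq != 0 -> qq *: X - (qq - qq^-1) *: X - qq^-1 *: X = 0.
Proof. by move=> h; rewrite -!scalerBl subKr subrr scale0r. Qed.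

Lemma Iinv_at j x : inP R x -> exists2 c : F, c != 0 &
  dep (fun f => Iinv a q j f (mkW R x) - c *: f (mkW R (refl (a j) x)))
      (fun y => y = x \/ Q R y < Q R x).
Proof.
move=> hx.
have hqq := hq j; set qq := qj q a j in hqq *.
have em := toZ_spec (hx (a j) (a_R hsimp j)).
rewrite /Iinv /Iop /Jj val_mkW // act_sref -/qq.
move: em; case: (toZ (pair x (coroot (a j)))) => [[|k]|k] em.
-
  have rx : refl (a j) x = x by rewrite reflE em scale0r subr0.
  exists qq^-1; first by rewrite invr_eq0.
  move=> f g _; rewrite rx !big_geq // !oppr0 !scaler0 !addr0.
  by rewrite !scal3.
-
  have rx : refl (a j) x = x - k.+1%:R *: a j by rewrite reflE em.
  exists qq^-1; first by rewrite invr_eq0.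
  have key : forall f : CP K R,
      qq *: f (mkW R (refl (a j) x)) +
      (qq - qq^-1) *: - (\sum_(1 <= i < k.+2) f (mkW R (x - i%:R *: a j))) -
      (qq - qq^-1) *: f (mkW R x) - qq^-1 *: f (mkW R (refl (a j) x))
      = - ((qq - qq^-1) *: \sum_(1 <= i < k.+1) f (mkW R (x - i%:R *: a j)))
        - (qq - qq^-1) *: f (mkW R x).
    move=> f; rewrite big_nat_recr //= -rx.
    set S := \sum_(_ <= _ < _) _; set X := f _; set Y := f _.
    have hq' : qq *: X = (qq - qq^-1) *: X + qq^-1 *: X by rewrite -scalerDl subrK.
    rewrite hq' scalerN scalerDr; ring.
  move=> f g H; rewrite !key; congr (- (_ *: _) - _ *: _).
    apply: eq_big_nat => i /andP [hi1 hi2]; apply: H; first exact: (inP_subk hR hsimp).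
    right; apply: (Q_interior hR hsimp); rewrite em -pmulrn.
    rewrite pmulr_rlt0 ?ltr0n // subr_lt0 ltr_nat //.
  by apply: H => //; left.
-
  have rx : refl (a j) x = x + k.+1%:R *: a j.
    by rewrite reflE em NegzE intrN scaleNr opprK.
  exists qq => //.
  have key : forall f : CP K R,
      qq *: f (mkW R (refl (a j) x)) +
      (qq - qq^-1) *: (\sum_(0 <= i < k.+1) f (mkW R (x + i%:R *: a j))) -
      (qq - qq^-1) *: f (mkW R x) - qq *: f (mkW R (refl (a j) x))
      = (qq - qq^-1) *: \sum_(0 <= i < k.+1) f (mkW R (x + i%:R *: a j))
        - (qq - qq^-1) *: f (mkW R x).
    by move=> f; ring.
  move=> f g H; rewrite !key; congr (_ *: _ - _ *: _).
    apply: eq_big_nat => i /andP [hi1 hi2]; apply: H; first exact: (inP_addk hR hsimp).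
    case: i hi1 hi2 => [|i] _ hi2; first by left; rewrite scale0r addr0.
    right; have -> : x + i.+1%:R *: a j = x - (- i.+1%:R) *: a j by rewrite scaleNr opprK.
    apply: (Q_interior hR hsimp); rewrite em NegzE intrN -pmulrn opprK.
    rewrite nmulr_rlt0 ?oppr_lt0 ?ltr0n // addrC subr_gt0 ltr_nat //.
  by apply: H => //; left.
Qed.


Lemma Iinv_eq j x (f g : CP K R) : inP R x ->
  f (mkW R x) = g (mkW R x) -> f (mkW R (refl (a j) x)) = g (mkW R (refl (a j) x)) ->
  (forall y, inP R y -> Q R y < Q R x -> f (mkW R y) = g (mkW R y)) ->
  Iinv a q j f (mkW R x) = Iinv a q j g (mkW R x).
Proof.
move=> hx e1 e2 e3; have [c _ hd] := Iinv_at j hx.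
have h := hd f g (fun y hy hD => match hD with or_introl e => ltac:(by rewrite e) | or_intror hl => e3 y hy hl end).
by move: h; rewrite e2 => /addIr.
Qed.

Lemma split_lemma (c1 c2 : F) (A B X : K) :
  A - (c1 * c2) *: X = (A - c1 *: B) + c1 *: (B - c2 *: X).
Proof. by rewrite scalerBr scalerA addrA subrK. Qed.

Definition Dset (u : seq 'I_n) y := fun z =>
  Q R z < Q R y \/ exists u', (size u' < size u)%N /\ z = y *m WM a u'.

Lemma IinvWord_cons j u (f : CP K R) : IinvWord a q (j :: u) f = IinvWord a q u (Iinv a q j f).
Proof. by []. Qed.

Lemma triang u y : inP R y -> exists2 c : F, c != 0 &
  dep (fun f => IinvWord a q u f (mkW R y) - c *: f (mkW R (y *m WM a u))) (Dset u y).
Proof.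
move=> hy; elim: u => [|j u [c1 c1n hd1]].
  exists 1; first exact: oner_neq0.
  by move=> f g _ /=; rewrite !WM_nil !mulmx1 !scale1r !subrr.
set z' := y *m WM a u.
have hz' : inP R z' := inP_word hR hsimp u hy.
have Qz' : Q R z' = Q R y by rewrite /z' (Q_word hR hsimp).
have [c2 c2n hd2] := Iinv_at j hz'.
have lead : refl (a j) z' = y *m WM a (j :: u) by rewrite WM_cons mulmxA mul_Sm.
exists (c1 * c2); first by rewrite mulf_neq0.
move=> f1 f2 H.
have split : forall f : CP K R,
   IinvWord a q (j :: u) f (mkW R y) - (c1 * c2) *: f (mkW R (y *m WM a (j :: u)))
   = (IinvWord a q u (Iinv a q j f) (mkW R y) - c1 *: Iinv a q j f (mkW R z'))
     + c1 *: (Iinv a q j f (mkW R z') - c2 *: f (mkW R (refl (a j) z'))).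
  by move=> f; rewrite IinvWord_cons lead (split_lemma _ _ _ (Iinv a q j f (mkW R z'))).
rewrite !split; congr (_ + c1 *: _).
  apply: hd1 => yy hyy [hlt|[u'' [hs eyy]]]; last subst yy.
    apply: Iinv_eq => //.
    - by apply: H => //; left.
    - apply: H; first exact: inP_refl (a_R hsimp j) hyy.
      by left; rewrite Q_refl ?(a_R hsimp).
    - by move=> w hw hwlt; apply: H => //; left; apply: lt_trans hlt.
  apply: Iinv_eq => //.
  - by apply: H => //; right; exists u''; split => //; apply: ltnW.
  - apply: H; first exact: inP_refl (a_R hsimp j) hyy.
    by right; exists (j :: u''); split => //; rewrite WM_cons mulmxA mul_Sm.
  - move=> w hw hwlt; apply: H => //; left.
    by move: hwlt; rewrite (Q_word hR hsimp).
apply: hd2 => yy hyy [->|hlt].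
  by apply: H => //; right; exists u; split.
by apply: H => //; left; rewrite -Qz'.
Qed.

End Hecke2.


Lemma wf_key (T : Type) (k1 k2 : T -> nat) :
  well_founded (fun x y => (k1 x < k1 y)%N \/ (k1 x = k1 y /\ (k2 x < k2 y)%N)).
Proof.
have outer : forall N y, (k1 y < N)%N -> Acc (fun x y => (k1 x < k1 y)%N \/ (k1 x = k1 y /\ (k2 x < k2 y)%N)) y.
  elim=> [//|N IHN].
  have inner : forall M y, (k1 y <= N)%N -> (k2 y < M)%N -> Acc (fun x y => (k1 x < k1 y)%N \/ (k1 x = k1 y /\ (k2 x < k2 y)%N)) y.
    elim=> [//|M IHM] y h1 h2; constructor => z [hz|[hz1 hz2]].
      by apply: IHN; apply: leq_trans hz h1.
    by apply: IHM; [rewrite hz1 | apply: leq_trans hz2 _].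
  by move=> y hy; apply: (inner (k2 y).+1).
by move=> y; apply: (outer (k1 y).+1).
Qed.

Section TriBij.
Variables (F : realFieldType) (K : fieldExtType F) (W : Type).
Variable (T : (W -> K) -> (W -> K)) (lt : W -> W -> Prop) (wf : well_founded lt).
Variable (c : W -> F).
Hypothesis hc : forall la, c la != 0.
Hypothesis H : forall la f g, (forall nu, lt nu la -> f nu = g nu) ->
  T f la - c la *: f la = T g la - c la *: g la.

Lemma tri_inj : injective T.
Proof.
move=> f g e; apply: functional_extensionality => la.
elim/(well_founded_ind wf): la => la IH.
have := H IH; rewrite e => /addrI /eqP; rewrite eqr_opp => /eqP.
by move/scalerI; apply.
Qed.

Definition ext la (rec : forall nu, lt nu la -> K) : W -> K :=
  fun nu => match excluded_middle_informative (lt nu la) with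
            | left p => rec nu p | right _ => 0 end.

Lemma tri_surj h : exists f, T f = h.
Proof.
pose step la (rec : forall nu, lt nu la -> K) : K :=
  (c la)^-1 *: (h la - (T (ext rec) la - c la *: ext rec la)).
pose f := Fix wf (fun _ => K) step.
have Fext : forall x (F1 F2 : forall nu, lt nu x -> K),
    (forall y p, F1 y p = F2 y p) -> step x F1 = step x F2.
  move=> x F1 F2 hF; rewrite /step; have -> : ext F1 = ext F2; last by [].
  apply: functional_extensionality => nu; rewrite /ext.
  by case: excluded_middle_informative.
have feq : forall la, f la = step la (fun nu _ => f nu).
  by move=> la; exact: (Fix_eq wf (fun _ => K) step Fext la).
exists f; apply: functional_extensionality => la.
have hext : forall nu, lt nu la -> f nu = @ext la (fun nu _ => f nu) nu.
  by move=> nu hnu; rewrite /ext; case: excluded_middle_informative => // hn; case: (hn hnu).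
have := H hext; set B := (_ - _ *: ext _ _) => hB.
have : T f la = B + c la *: f la by rewrite -hB subrK.
move=> ->; rewrite feq /step -/B scalerA divff // scale1r.
by rewrite addrC subrK.
Qed.

Lemma tri_bij : bijective T.
Proof.
pose g h := epsilon (inhabits (fun _ => 0)) (fun f => T f = h).
have gK : forall h, T (g h) = h.
  by move=> h; apply: (epsilon_spec (inhabits (fun _ => 0)) (fun f => T f = h)); apply: tri_surj.
exists g => // f; apply: tri_inj; exact: gK.
Qed.

End TriBij.


Section Main.
Variables (F : realFieldType) (n : nat).
Local Notation V := 'rV[F]_n.
Implicit Types x y z al be : V.
Variables (K : fieldExtType F) (R : seq V) (v : V) (a : 'I_n -> V) (q : aff F n -> F).
Hypotheses (hR : root_system R) (hreg : regular R v) (hsimp : simple_roots R v a)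
  (hlm : length_multiplicative R v a q).

Lemma q_nz w : inW R a w -> q w != 0.
Proof. by case: hlm => h _; apply: h. Qed.

Lemma qj_nz j : qj q a j != 0.
Proof.
apply: q_nz; split; last exact: inP0.
by exists [:: j]; rewrite /= /mulW /= mul1mx.
Qed.

Definition Phi x := len R v (wl R v a x).
Definition ltw (nu la : weight R) :=
  (qk R (proj1_sig nu) < qk R (proj1_sig la))%N \/
  (qk R (proj1_sig nu) = qk R (proj1_sig la) /\ (Phi (proj1_sig nu) < Phi (proj1_sig la))%N).

Lemma ltw_wf : well_founded ltw.
Proof. exact: (wf_key (fun nu : weight R => qk R (proj1_sig nu)) (fun nu => Phi (proj1_sig nu))). Qed.

Lemma calJ_tri (la : weight R) : exists2 c : F, c != 0 &
  forall f g : CP K R, (forall nu, ltw nu la -> f nu = g nu) ->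
    calJ v a q f la - c *: f la = calJ v a q g la - c *: g la.
Proof.
set x := proj1_sig la; have hx : inP R x := proj2_sig la.
have [hw0 hw2 hdom hmin] := wl_spec hR hreg hsimp x.
set w := wl R v a x in hw0 hw2 hdom hmin.
have [u0 eu0] := inW0_word hw0 hw2.
set u := redword R v a (invW w).
have [hu1 hu2] : wordW a u = invW w /\ size u = len R v (invW w).
  apply: (epsilon_spec (inhabits [::]) (fun u => wordW a u = invW w /\ size u = len R v (invW w))).
  have [u' [e1 e2]] := reduced_word hR hreg hsimp (rev u0).
  by exists u'; rewrite eu0 (invW_word hR hsimp) -e1.
set mu := act w x.
have emu : mu = x *m WM a u0 by rewrite /mu eu0 act_wordW.
have hmu : inP R mu by rewrite emu; apply: (inP_word hR hsimp).
have [c hc hd] := triang (v:=v) hR hsimp K qj_nz u hmu.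
have lead : mu *m WM a u = x.
  have : WM a u = WM a (rev u0) by rewrite /WM hu1 eu0 (invW_word hR hsimp).
  by move=> ->; rewrite emu (WM_rev_K hR hsimp).
set C := q (transl x) * q w.
have hC : C != 0.
  rewrite mulf_neq0 //; apply: q_nz; split.
  - by exists [::].
  - exact: hx.
  - by rewrite eu0; exact: inW0_wordW.
  - by rewrite hw2; exact: inP0.
exists (C * c); first by rewrite mulf_neq0.
move=> f g H.
have ex : forall h : CP K R, calJ v a q h la - (C * c) *: h la
   = C *: (IinvWord a q u h (mkW R mu) - c *: h (mkW R (mu *m WM a u))).
  by move=> h; rewrite lead /x mkW_val scalerBr scalerA.
rewrite !ex; congr (C *: _); apply: hd => y hy hD.
apply: H; rewrite /ltw (val_mkW hy) -/x.
have Qmu : Q R mu = Q R x by rewrite emu (Q_word hR hsimp).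
case: hD => [hlt|[u' [hs ey]]].
  by left; rewrite -(qk_lt hy hx) -Qmu.
right; split.
  by apply: qk_eq => //; rewrite ey (Q_word hR hsimp).
have [_ _ _ hminy] := wl_spec hR hreg hsimp y.
apply: (leq_ltn_trans (hminy (wordW a (rev u')) _ _ _)).
- exact: inW0_wordW.
- by rewrite wordW_eq.
- by rewrite act_wordW ey (WM_rev_K hR hsimp).
apply: (leq_ltn_trans (len_le hR hreg hsimp _)); rewrite size_rev.
apply: (leq_trans hs); rewrite hu2 eu0 (len_inv hR hreg hsimp) /Phi -/w eu0 //.
Qed.


Definition linc (c : K) (f g : CP K R) : CP K R := fun la => c * f la + g la.

Lemma Jj_lin j c f g la : Jj a j (linc c f g) la = c * Jj a j f la + Jj a j g la.
Proof.
rewrite /Jj /linc; case: (toZ _) => m.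
  by rewrite big_split /= -mulr_sumr opprD mulrN.
by rewrite big_split /= -mulr_sumr.
Qed.

Lemma Iinv_lin j c f g : Iinv a q j (linc c f g) = linc c (Iinv a q j f) (Iinv a q j g).
Proof.
apply: functional_extensionality => la.
rewrite /Iinv /Iop Jj_lin /linc !scalerDr !scalerAr.
set A := qj q a j *: _; set B := qj q a j *: _; set d := qj q a j - _.
set J1 := d *: Jj a j f la; set J2 := d *: Jj a j g la.
set Z1 := d *: f la; set Z2 := d *: g la.
ring.
Qed.

Lemma IinvWord_lin u c f g : IinvWord a q u (linc c f g) = linc c (IinvWord a q u f) (IinvWord a q u g).
Proof.
elim: u f g => [|j u IH] f g //.
by rewrite !IinvWord_cons Iinv_lin IH.
Qed.

Lemma calJ_lin c f g : calJ v a q (linc c f g) = linc c (calJ v a q f) (calJ v a q g).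
Proof.
apply: functional_extensionality => la.
by rewrite /calJ IinvWord_lin /linc scalerDr scalerAr.
Qed.

End Main.


Theorem mainTheorem9 (F : realFieldType) (K : fieldExtType F) (n : nat)
    (R : seq 'rV[F]_n) (v : 'rV[F]_n) (a : 'I_n -> 'rV[F]_n)
    (q : 'M[F]_n * 'rV[F]_n -> F) :
  root_system R -> regular R v -> simple_roots R v a ->
  length_multiplicative R v a q ->
  (forall (c : K) (f g : CP K R),
      calJ v a q (fun la => c * f la + g la)
      = (fun la => c * calJ v a q f la + calJ v a q g la)) /\
  bijective (@calJ F n K R v a q).
Proof.
move=> hR hreg hsimp hlm; split.
  by move=> c f g; exact: (calJ_lin v a q c f g).
have hc : forall la : weight R, {c : F | c != 0 /\ forall f g : CP K R,
    (forall nu, ltw v a nu la -> f nu = g nu) ->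
    calJ v a q f la - c *: f la = calJ v a q g la - c *: g la}.
  move=> la; apply: constructive_indefinite_description.
  by case: (calJ_tri K hR hreg hsimp hlm la) => c h1 h2; exists c.
apply: (@tri_bij F K (weight R) (@calJ F n K R v a q) (ltw v a) (ltw_wf v a)
          (fun la => sval (hc la))).
  by move=> la; case: (hc la) => c [].
by move=> la f g H; case: (hc la) => c [_ h] /=; apply: h.
Qed.
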